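(* Let $\Psi$ be a well-formed declarative context and suppose $\Psi\vdash e\Leftarrow A$. Then: (i) if $\Psi\vdash[(e:A)/x]e'\Leftarrow C$ then $\Psi,x:A\vdash e'\Leftarrow C$; (ii) if $\Psi\vdash[(e:A)/x]e'\Rightarrow C$ then $\Psi,x:A\vdash e'\Rightarrow C$; (iii) if $\Psi\vdash[(e:A)/x]e'\bullet B\Rightarrow\!\!\Rightarrow C$ then $\Psi,x:A\vdash e'\bullet B\Rightarrow\!\!\Rightarrow C$.
   Context: Types $A,B,C ::= 1\mid\alpha\mid\forall\alpha.A\mid A\to B$; monotypes $\sigma,\tau ::= 1\mid\alpha\mid\sigma\to\tau$; declarative contexts $\Psi ::= \cdot\mid\Psi,\alpha\mid\Psi,x:A$ (variables distinct; $x$ is not declared in $\Psi$). Well-formedness $\Psi\vdash A$: all free type variables of $A$ are declared in $\Psi$. Declarative subtyping $\Psi\vdash A\le B$: least relation with $\alpha\in\Psi\Rightarrow\Psi\vdash\alpha\le\alpha$; $\Psi\vdash1\le1$; ($\Psi\vdash B_1\le A_1$, $\Psi\vdash A_2\le B_2$) $\Rightarrow\Psi\vdash A_1\to A_2\le B_1\to B_2$; ($\Psi\vdash\tau$ monotype, $\Psi\vdash[\tau/\alpha]A\le B$) $\Rightarrow\Psi\vdash\forall\alpha.A\le B$; $\Psi,\beta\vdash A\le B\Rightarrow\Psi\vdash A\le\forall\beta.B$. Terms $e ::= x\mid()\mid\lambda x.e\mid e_1\,e_2\mid(e:A)$; $[e_0/x]e'$ is capture-avoiding term substitution. Declarative bidirectional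 judgments are defined mutually by: $(x:A)\in\Psi\Rightarrow\Psi\vdash x\Rightarrow A$; ($\Psi\vdash e\Rightarrow A$, $\Psi\vdash A\le B$) $\Rightarrow\Psi\vdash e\Leftarrow B$; ($\Psi\vdash A$, $\Psi\vdash e\Leftarrow A$) $\Rightarrow\Psi\vdash(e:A)\Rightarrow A$; $\Psi\vdash()\Leftarrow1$; $\Psi\vdash()\Rightarrow1$; $\Psi,\alpha\vdash e\Leftarrow A\Rightarrow\Psi\vdash e\Leftarrow\forall\alpha.A$; ($\Psi\vdash\tau$ monotype, $\Psi\vdash e\bullet[\tau/\alpha]A\Rightarrow\!\!\Rightarrow C$) $\Rightarrow\Psi\vdash e\bullet\forall\alpha.A\Rightarrow\!\!\Rightarrow C$; $\Psi,x:A\vdash e\Leftarrow B\Rightarrow\Psi\vdash\lambda x.e\Leftarrow A\to B$; ($\Psi\vdash\sigma\to\tau$ monotypes, $\Psi,x:\sigma\vdash e\Leftarrow\tau$) $\Rightarrow\Psi\vdash\lambda x.e\Rightarrow\sigma\to\tau$; ($\Psi\vdash e_1\Rightarrow A$, $\Psi\vdash e_2\bullet A\Rightarrow\!\!\Rightarrow C$) $\Rightarrow\Psi\vdash e_1\,e_2\Rightarrow C$; $\Psi\vdash e\Leftarrow A\Rightarrow\Psi\vdash e\bullet A\to C\Rightarrow\!\!\Rightarrow C$. *)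

(* Defs.v *)
(* Locally nameless representation (Aydemir et al.):
   bound variables are de Bruijn indices, free variables are names (nat);
   binders are entered with cofinite quantification. *)
From Stdlib Require Import List.
Import ListNotations.

Definition var := nat.

Inductive typ : Type :=
  | TUnit : typ
  | TBVar : nat -> typ
  | TFVar : var -> typ
  | TAll  : typ -> typ          (* forall alpha. A  (body uses TBVar 0) *)
  | TArr  : typ -> typ -> typ.

Fixpoint open_typ_rec (k : nat) (U : typ) (A : typ) : typ :=
  match A with
  | TUnit => TUnit
  | TBVar n => if Nat.eqb k n then U else TBVar n
  | TFVar a => TFVar a
  | TAll B => TAll (open_typ_rec (S k) U B)
  | TArr B1 B2 => TArr (open_typ_rec k U B1) (open_typ_rec k U B2)
  end.

Definition open_typ (A U : typ) : typ := open_typ_rec 0 U A.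

Inductive mono : typ -> Prop :=
  | mono_unit : mono TUnit
  | mono_var : forall a, mono (TFVar a)
  | mono_arr : forall s t, mono s -> mono t -> mono (TArr s t).

Inductive trm : Type :=
  | EBVar : nat -> trm
  | EFVar : var -> trm
  | EUnit : trm
  | ELam  : trm -> trm
  | EApp  : trm -> trm -> trm
  | EAnno : trm -> typ -> trm.

Fixpoint open_trm_rec (k : nat) (u : trm) (e : trm) : trm :=
  match e with
  | EBVar n => if Nat.eqb k n then u else EBVar n
  | EFVar x => EFVar x
  | EUnit => EUnit
  | ELam e1 => ELam (open_trm_rec (S k) u e1)
  | EApp e1 e2 => EApp (open_trm_rec k u e1) (open_trm_rec k u e2)
  | EAnno e1 A => EAnno (open_trm_rec k u e1) A
  end.

Definition open_trm (e u : trm) : trm := open_trm_rec 0 u e.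

(* [u/x]e : substitution for a free variable; capture-avoiding by
   construction in the locally nameless representation. *)
Fixpoint subst (x : var) (u : trm) (e : trm) : trm :=
  match e with
  | EBVar n => EBVar n
  | EFVar y => if Nat.eqb x y then u else EFVar y
  | EUnit => EUnit
  | ELam e1 => ELam (subst x u e1)
  | EApp e1 e2 => EApp (subst x u e1) (subst x u e2)
  | EAnno e1 A => EAnno (subst x u e1) A
  end.

(* Declarative contexts; the head of the list is the most recent entry,
   so  Psi, alpha  is  CTVar alpha :: Psi  and  Psi, x:A  is  CVar x A :: Psi. *)
Inductive entry : Type :=
  | CTVar : var -> entry
  | CVar  : var -> typ -> entry.

Definition ctx := list entry.

Fixpoint tdom (G : ctx) : list var :=
  match G with
  | [] => []
  | CTVar a :: G' => a :: tdom G'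
  | CVar _ _ :: G' => tdom G'
  end.

Fixpoint vdom (G : ctx) : list var :=
  match G with
  | [] => []
  | CTVar _ :: G' => vdom G'
  | CVar x _ :: G' => x :: vdom G'
  end.

(* Psi |- A : all free type variables of A are declared in Psi
   (and A is locally closed). *)
Inductive wf_typ : ctx -> typ -> Prop :=
  | wf_unit : forall G, wf_typ G TUnit
  | wf_var : forall G a, In a (tdom G) -> wf_typ G (TFVar a)
  | wf_arr : forall G A B, wf_typ G A -> wf_typ G B -> wf_typ G (TArr A B)
  | wf_all : forall G A (L : list var),
      (forall a, ~ In a L -> wf_typ (CTVar a :: G) (open_typ A (TFVar a))) ->
      wf_typ G (TAll A).

Inductive wf_ctx : ctx -> Prop :=
  | wf_nil : wf_ctx []
  | wf_cons_tvar : forall G a, wf_ctx G -> ~ In a (tdom G) ->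
      wf_ctx (CTVar a :: G)
  | wf_cons_var : forall G x A, wf_ctx G -> ~ In x (vdom G) -> wf_typ G A ->
      wf_ctx (CVar x A :: G).

Inductive sub : ctx -> typ -> typ -> Prop :=
  | sub_var : forall G a, In a (tdom G) -> sub G (TFVar a) (TFVar a)
  | sub_unit : forall G, sub G TUnit TUnit
  | sub_arr : forall G A1 A2 B1 B2,
      sub G B1 A1 -> sub G A2 B2 -> sub G (TArr A1 A2) (TArr B1 B2)
  | sub_allL : forall G A B t,
      mono t -> wf_typ G t -> sub G (open_typ A t) B -> sub G (TAll A) B
  | sub_allR : forall G A B (L : list var),
      (forall b, ~ In b L -> sub (CTVar b :: G) A (open_typ B (TFVar b))) ->
      sub G A (TAll B).

(* Declarative bidirectional typing:
   check G e A   : Psi |- e <= A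
   infer G e A   : Psi |- e => A
   appj G e A C   : Psi |- e . A =>> C *)
Inductive check : ctx -> trm -> typ -> Prop :=
  | check_sub : forall G e A B, infer G e A -> sub G A B -> check G e B
  | check_unit : forall G, check G EUnit TUnit
  | check_all : forall G e A (L : list var),
      (forall a, ~ In a L -> check (CTVar a :: G) e (open_typ A (TFVar a))) ->
      check G e (TAll A)
  | check_lam : forall G e A B (L : list var),
      (forall x, ~ In x L -> check (CVar x A :: G) (open_trm e (EFVar x)) B) ->
      check G (ELam e) (TArr A B)
with infer : ctx -> trm -> typ -> Prop :=
  | infer_var : forall G x A, In (CVar x A) G -> infer G (EFVar x) A
  | infer_anno : forall G e A, wf_typ G A -> check G e A -> infer G (EAnno e A) A
  | infer_unit : forall G, infer G EUnit TUnit
  | infer_lam : forall G e s t (L : list var),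
      mono (TArr s t) -> wf_typ G (TArr s t) ->
      (forall x, ~ In x L -> check (CVar x s :: G) (open_trm e (EFVar x)) t) ->
      infer G (ELam e) (TArr s t)
  | infer_app : forall G e1 e2 A C,
      infer G e1 A -> appj G e2 A C -> infer G (EApp e1 e2) C
with appj : ctx -> trm -> typ -> typ -> Prop :=
  | app_all : forall G e A C t,
      mono t -> wf_typ G t -> appj G e (open_typ A t) C -> appj G e (TAll A) C
  | app_arr : forall G e A C, check G e A -> appj G e (TArr A C) C.

(* Main.v *)
Require Import Defs.
From Stdlib Require Import List Arith Lia.
Import ListNotations.

Scheme check_mut := Induction for check Sort Prop
with infer_mut := Induction for infer Sort Prop
with appj_mut := Induction for appj Sort Prop.
Combined Scheme typing_mut from check_mut, infer_mut, appj_mut.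

Lemma in_tdom : forall G a, In a (tdom G) <-> In (CTVar a) G.
Proof.
  induction G as [|[b|y B] G IH]; simpl; intros a; split; intros H; try tauto.
  - destruct H as [H|H]; [left; congruence| right; apply IH; auto].
  - destruct H as [H|H]; [left; congruence| right; apply IH; auto].
  - right; apply IH; auto.
  - destruct H as [H|H]; [discriminate| apply IH; auto].
Qed.

Lemma incl_tdom : forall G G', incl G G' -> forall a, In a (tdom G) -> In a (tdom G').
Proof. intros G G' H a Ha. apply in_tdom. apply H. apply in_tdom. auto. Qed.

Lemma incl_cons2 : forall (en : entry) G G', incl G G' -> incl (en :: G) (en :: G').
Proof. intros en G G' H z [Hz|Hz]; [left; auto | right; auto]. Qed.

Lemma wf_typ_weak : forall G T, wf_typ G T -> forall G', incl G G' -> wf_typ G' T.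
Proof.
  induction 1; intros G' Hi.
  - constructor.
  - constructor. eapply incl_tdom; eauto.
  - constructor; auto.
  - apply wf_all with L. intros a Ha. apply H0; auto. apply incl_cons2; auto.
Qed.

Lemma sub_weak : forall G T U, sub G T U -> forall G', incl G G' -> sub G' T U.
Proof.
  induction 1; intros G' Hi.
  - constructor. eapply incl_tdom; eauto.
  - constructor.
  - constructor; auto.
  - eapply sub_allL; eauto. eapply wf_typ_weak; eauto.
  - apply sub_allR with L. intros b Hb. apply H0; auto. apply incl_cons2; auto.
Qed.

Lemma typing_weak :
  (forall G t C, check G t C -> forall G', incl G G' -> check G' t C) /\
  (forall G t C, infer G t C -> forall G', incl G G' -> infer G' t C) /\
  (forall G t B C, appj G t B C -> forall G', incl G G' -> appj G' t B C).
Proof.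
  apply typing_mut;
  intros; try (econstructor; eauto using sub_weak, wf_typ_weak, incl_cons2; fail).
  all: try (econstructor; intros; eauto using incl_cons2; fail).
  all: econstructor; eauto using wf_typ_weak; intros; eauto using incl_cons2.
Qed.

Fixpoint lc_at (k : nat) (e : trm) : Prop :=
  match e with
  | EBVar n => n < k
  | EFVar _ => True
  | EUnit => True
  | ELam e1 => lc_at (S k) e1
  | EApp e1 e2 => lc_at k e1 /\ lc_at k e2
  | EAnno e1 _ => lc_at k e1
  end.

Lemma lc_open : forall e k v, lc_at k (open_trm_rec k v e) -> lc_at (S k) e.
Proof.
  induction e; simpl; intros k w H; try tauto; eauto.
  - destruct (Nat.eqb_spec k n); simpl in H; lia.
  - destruct H; split; eauto.
Qed.

Lemma lc_open_id : forall e k j v, lc_at k e -> k <= j -> open_trm_rec j v e = e.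
Proof.
  induction e; simpl; intros k j w H Hle; auto.
  - destruct (Nat.eqb_spec j n); auto; lia.
  - f_equal. eapply IHe; eauto. lia.
  - destruct H; f_equal; eauto.
  - f_equal; eauto.
Qed.

Lemma fresh : forall L : list var, exists a, ~ In a L.
Proof.
  intros L. exists (S (fold_right plus 0 L)).
  assert (forall a, In a L -> a <= fold_right plus 0 L).
  { induction L; simpl; intros b Hb; [tauto|]. destruct Hb; subst; [lia|].
    specialize (IHL b H); lia. }
  intros Hin. apply H in Hin. lia.
Qed.

Lemma typing_lc :
  (forall G t C, check G t C -> lc_at 0 t) /\
  (forall G t C, infer G t C -> lc_at 0 t) /\
  (forall G t B C, appj G t B C -> lc_at 0 t).
Proof.
  apply typing_mut;
  intros; simpl; auto.
  - destruct (fresh L) as [a Ha]; eauto.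
  - destruct (fresh L) as [a Ha]. eapply lc_open. eapply H; eauto.
  - destruct (fresh L) as [a Ha]. eapply lc_open. eapply H; eauto.
Qed.

Lemma open_subst : forall e k y x u, x <> y ->
  (forall j, open_trm_rec j (EFVar y) u = u) ->
  open_trm_rec k (EFVar y) (subst x u e) = subst x u (open_trm_rec k (EFVar y) e).
Proof.
  induction e; simpl; intros k y x u Hxy Hu; auto.
  - destruct (Nat.eqb k n); simpl; auto.
    destruct (Nat.eqb_spec x y); congruence.
  - destruct (Nat.eqb x v); auto.
  - f_equal; auto.
  - f_equal; auto.
  - f_equal; auto.
Qed.

Lemma incl_swap : forall a b (G : ctx), incl (a :: b :: G) (b :: a :: G).
Proof. intros a b G z Hz; simpl in *; tauto. Qed.

Lemma incl_tl1 : forall a (G : ctx), incl G (a :: G).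
Proof. intros a G z Hz; simpl; auto. Qed.

Ltac inv_subst H :=
  match type of H with subst ?x ?u ?e' = _ =>
    destruct e'; simpl in H; try discriminate;
    try (match type of H with context [Nat.eqb ?a ?b] => destruct (Nat.eqb_spec a b) end;
         subst; try (unfold u in H); try discriminate) end.

Theorem mainTheorem4 :
  forall (G : ctx) (e : trm) (A : typ) (x : var),
    wf_ctx G -> ~ In x (vdom G) -> check G e A ->
    (forall (e' : trm) (C : typ),
        check G (subst x (EAnno e A) e') C -> check (CVar x A :: G) e' C) /\
    (forall (e' : trm) (C : typ),
        infer G (subst x (EAnno e A) e') C -> infer (CVar x A :: G) e' C) /\
    (forall (e' : trm) (B C : typ),
        appj G (subst x (EAnno e A) e') B C -> appj (CVar x A :: G) e' B C).
Proof.
  intros G0 e A x _ _ He.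
  assert (Hu : forall j y, open_trm_rec j (EFVar y) (EAnno e A) = EAnno e A).
  { intros j y. simpl. f_equal. eapply lc_open_id. apply (proj1 typing_lc _ _ _ He). lia. }
  destruct typing_weak as [Wc [Wi Wa]].
  set (u := EAnno e A) in *.
  assert (Main :
    (forall G t C, check G t C -> forall e', subst x u e' = t -> check (CVar x A :: G) e' C) /\
    (forall G t C, infer G t C -> forall e', subst x u e' = t -> infer (CVar x A :: G) e' C) /\
    (forall G t B C, appj G t B C -> forall e', subst x u e' = t -> appj (CVar x A :: G) e' B C)).
  { apply typing_mut;
    intros.
    - eapply check_sub; eauto. eapply sub_weak; eauto using incl_tl1.
    - inv_subst H. constructor.
    - apply check_all with L. intros a Ha. eapply Wc; [apply H; eauto | apply incl_swap].
    - inv_subst H0. injection H0 as H0.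
      apply check_lam with (x :: L). intros y Hy. simpl in Hy.
      eapply Wc; [apply (H y); [tauto|] | apply incl_swap].
      subst. unfold open_trm. symmetry. apply open_subst; [tauto|]. intros; apply Hu.
    - inv_subst H. injection H as H; subst.
      constructor. simpl. right; auto.
    - inv_subst H0.
      + injection H0 as H0 H1; subst. apply infer_var; simpl; auto.
      + injection H0 as H0 H1; subst. constructor.
        * eapply wf_typ_weak; eauto using incl_tl1.
        * apply H; auto.
    - inv_subst H. constructor.
    - inv_subst H0. injection H0 as H0.
      apply infer_lam with (x :: L); auto.
      + eapply wf_typ_weak; eauto using incl_tl1.
      + intros y Hy. simpl in Hy.
        eapply Wc; [apply (H y); [tauto|] | apply incl_swap].
        subst. unfold open_trm. symmetry. apply open_subst; [tauto|]. intros; apply Hu.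
    - inv_subst H1. injection H1 as H1 H2. econstructor; eauto.
    - eapply app_all; eauto. eapply wf_typ_weak; eauto using incl_tl1.
    - apply app_arr; auto. }
  destruct Main as [M1 [M2 M3]].
  split; [|split]; intros; eauto.
Qed.
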